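(* Let $K\subset\hat{\mathbb{C}}$ be a compactum and $h: K\rightarrow\hat{\mathbb{C}}$ an embedding. Then $h(d)\in\mathcal{D}_{h(K)}^{PS}$ for every $d\in\mathcal{D}_K^{PS}$. Therefore the Peano models $\mathcal{D}_K^{PS}$ and $\mathcal{D}_{h(K)}^{PS}$ (with quotient topologies) are homeomorphic.
   Context: A compactum is a compact metric space. A Peano space is a compactum having at most countably many non-degenerate components, each locally connected, such that for every $C>0$ at most finitely many of them have diameter greater than $C$. A monotone decomposition of a compactum $K$ is an (upper semicontinuous) partition of $K$ into subcontinua, with the quotient topology on the hyperspace. For a compactum $K\subset\hat{\mathbb{C}}$, $\mathcal{D}_K^{PS}$ denotes the unique monotone decomposition of $K$ with Peano hyperspace that is finer than every other such decomposition (its existence is known); the hyperspace $\mathcal{D}_K^{PS}$ with the quotient topology is called the Peano model of $K$. *)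

(* Defs.v *)
From HB Require Import structures.
From mathcomp Require Import all_boot all_order all_algebra.
From mathcomp Require Import all_classical all_reals all_analysis.
Set Implicit Arguments. Unset Strict Implicit. Unset Printing Implicit Defensive.
Import Order.TTheory GRing.Theory Num.Theory.
Import numFieldNormedType.Exports.
Local Open Scope classical_set_scope.
Local Open Scope ring_scope.

Section Abstract.
Context (R : realType) (S : Type).

Definition gconnected (tau : set (set S)) (A : set S) :=
  forall U V, tau U -> tau V -> A `<=` U `|` V -> A `&` U `&` V = set0 ->
    A `&` U = set0 \/ A `&` V = set0.

Definition gcomponent (X : set S) (tau : set (set S)) (C : set S) :=
  exists2 x, X x &
    C = \bigcup_(A in [set A | [/\ A `<=` X, gconnected tau A & A x]]) A.

Definition glocally_connected (tau : set (set S)) (C : set S) :=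
  forall x, C x -> forall U, tau U -> U x ->
    exists V, [/\ tau V, V x, C `&` V `<=` U & gconnected tau (C `&` V)].

Definition gcompact (X : set S) (tau : set (set S)) :=
  forall UU : set (set S), UU `<=` tau -> X `<=` \bigcup_(U in UU) U ->
    exists2 VV : set (set S), finite_set VV /\ VV `<=` UU & X `<=` \bigcup_(V in VV) V.

Definition is_metric (X : set S) (dist : S -> S -> R) :=
  forall x y z, X x -> X y -> X z ->
    [/\ 0 <= dist x y, (dist x y = 0 <-> x = y), dist x y = dist y x
      & dist x z <= dist x y + dist y z].

Definition metrizes (X : set S) (tau : set (set S)) (dist : S -> S -> R) :=
  is_metric X dist /\
  forall U, tau U <-> (U `<=` X /\ forall x, U x ->
     exists2 e : R, 0 < e & [set y | X y /\ dist x y < e] `<=` U).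

Definition nondegenerate (C : set S) := exists x y, [/\ C x, C y & x <> y].

Definition peano_space (X : set S) (tau : set (set S)) :=
  exists dist : S -> S -> R, [/\ metrizes X tau dist, gcompact X tau,
    countable [set C | gcomponent X tau C /\ nondegenerate C],
    (forall C, gcomponent X tau C -> nondegenerate C -> glocally_connected tau C) &
    (forall eps : R, 0 < eps -> finite_set
       [set C | gcomponent X tau C /\ exists x y, [/\ C x, C y & eps < dist x y]])].
End Abstract.

Definition ghomeomorphic (S1 S2 : Type) (X1 : set S1) (tau1 : set (set S1))
  (X2 : set S2) (tau2 : set (set S2)) :=
  exists f : S1 -> S2, [/\ set_bij X1 X2 f,
    (forall U, tau2 U -> tau1 (X1 `&` f @^-1` U)) &
    (forall U, tau1 U -> tau2 (f @` U))].

(* ---------- The Riemann sphere, modelled as the unit sphere S^2 in R^3 ---------- *)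
Section Sphere.
Context (R : realType).
Local Notation T := 'rV[R]_3.

Definition riemann_sphere : set T := [set x | \sum_(i < 3) x ord0 i ^+ 2 = 1].

Definition embedding_into_sphere (K : set T) (h : T -> T) :=
  [/\ h @` K `<=` riemann_sphere, {within K, continuous h}, set_inj K h &
      exists g : T -> T, (forall x, K x -> g (h x) = x) /\ {within h @` K, continuous g}].

Definition subcontinuum (d : set T) := [/\ d !=set0, compact d & connected d].

Definition usc (D : set (set T)) :=
  forall d, D d -> forall U, open U -> d `<=` U ->
    exists2 V, open V & d `<=` V /\ forall e, D e -> e `&` V !=set0 -> e `<=` U.

Definition monotone_decomposition (K : set T) (D : set (set T)) :=
  [/\ forall d, D d -> subcontinuum d /\ d `<=` K,
      forall d e, D d -> D e -> d `&` e !=set0 -> d = e,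
      K `<=` \bigcup_(d in D) d & usc D].

Definition rel_open (K A : set T) := exists2 W, open W & A = K `&` W.

(* quotient topology on the hyperspace D *)
Definition hyper_open (K : set T) (D : set (set T)) : set (set (set T)) :=
  [set UU | UU `<=` D /\ rel_open K (\bigcup_(d in UU) d)].

Definition peano_hyperspace (K : set T) (D : set (set T)) :=
  peano_space R D (hyper_open K D).

Definition finer (D1 D2 : set (set T)) := forall d, D1 d -> exists2 e, D2 e & d `<=` e.

Definition is_DPS (K : set T) (D : set (set T)) :=
  [/\ monotone_decomposition K D, peano_hyperspace K D &
      forall D', monotone_decomposition K D' -> peano_hyperspace K D' -> finer D D'].
End Sphere.

(* Main.v *)
Require Import Defs.
From HB Require Import structures.
From mathcomp Require Import all_boot all_order all_algebra.
From mathcomp Require Import all_classical all_reals all_analysis.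
Import numFieldNormedType.Exports.
Local Open Scope classical_set_scope.
Local Open Scope ring_scope.
Set Implicit Arguments.
Unset Strict Implicit.

Lemma eq0P {T : Type} (A : set T) : (forall x, A x -> False) -> A = set0.
Proof. by move=> H; apply/seteqP; split => x // /H. Qed.

Definition corr (S1 S2 : Type) (X1 : set S1) (X2 : set S2)
  (tau1 : set (set S1)) (tau2 : set (set S2)) (phi : S1 -> S2) (psi : S2 -> S1) :=
  [/\ (forall x, X1 x -> X2 (phi x)), (forall y, X2 y -> X1 (psi y)),
    (forall x, X1 x -> psi (phi x) = x), (forall y, X2 y -> phi (psi y) = y) &
    (forall U, tau1 U -> U `<=` X1 /\ tau2 (phi @` U)) /\
    (forall V, tau2 V -> V `<=` X2 /\ tau1 (psi @` V))].

Arguments corr {S1 S2}.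

Section Corr.
Context (S1 S2 : Type) (X1 : set S1) (X2 : set S2)
  (tau1 : set (set S1)) (tau2 : set (set S2)) (phi : S1 -> S2) (psi : S2 -> S1).

Lemma corr_sym : corr X1 X2 tau1 tau2 phi psi -> corr X2 X1 tau2 tau1 psi phi.
Proof. by case=> ? ? ? ? [? ?]; split. Qed.

Lemma imgK : corr X1 X2 tau1 tau2 phi psi -> forall U, U `<=` X2 -> phi @` (psi @` U) = U.
Proof.
case=> f1 f2 f3 f4 [f5 f6] U sU; apply/seteqP; split.
  by move=> _ [_ [y Uy <-] <-]; rewrite f4 //; apply: sU.
by move=> y Uy; exists (psi y); [exists y|rewrite f4 //; apply: sU].
Qed.

Lemma conn_tr : corr X1 X2 tau1 tau2 phi psi -> forall A, A `<=` X1 ->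
  gconnected tau1 A -> gconnected tau2 (phi @` A).
Proof.
case=> f1 f2 f3 f4 [f5 f6] A AX cA U V tU tV sub disj.
have [sU tU'] := f6 _ tU; have [sV tV'] := f6 _ tV.
case: (cA _ _ tU' tV').
- move=> x Ax; case: (sub (phi x) (ex_intro2 _ _ x Ax erefl)) => [Ux|Vx];
    [left|right]; exists (phi x) => //; exact: f3 (AX _ Ax).
- apply: eq0P => x [[Ax [u Uu ux]] [v Vv vx]].
  have eu : phi x = u by rewrite -ux f4 //; apply: sU.
  have ev : phi x = v by rewrite -vx f4 //; apply: sV.
  have : (phi @` A `&` U `&` V) (phi x).
    by split; [split; [exists x|rewrite eu]|rewrite ev].
  by rewrite disj.
- move=> AU0; left; apply: eq0P => _ [[x Ax <-] Ux].
  have : (A `&` psi @` U) x by split => //; exists (phi x) => //; exact: f3 (AX _ Ax).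
  by rewrite AU0.
- move=> AU0; right; apply: eq0P => _ [[x Ax <-] Ux].
  have : (A `&` psi @` V) x by split => //; exists (phi x) => //; exact: f3 (AX _ Ax).
  by rewrite AU0.
Qed.

Lemma nondeg_tr : corr X1 X2 tau1 tau2 phi psi -> forall C, C `<=` X1 ->
  Defs.nondegenerate C -> Defs.nondegenerate (phi @` C).
Proof.
case=> f1 f2 f3 f4 [f5 f6] C CX [x [y [Cx Cy xy]]].
exists (phi x), (phi y); split; [by exists x|by exists y|].
by move=> e; apply: xy; rewrite -(f3 _ (CX _ Cx)) e f3 //; apply: CX.
Qed.

End Corr.

Lemma comp_sub (S : Type) (X : set S) tau C : gcomponent X tau C -> C `<=` X.
Proof. by case=> x _ -> y [A [AX _ _] Ay]; exact: AX. Qed.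

Section Corr2.
Context (S1 S2 : Type) (X1 : set S1) (X2 : set S2)
  (tau1 : set (set S1)) (tau2 : set (set S2)) (phi : S1 -> S2) (psi : S2 -> S1).

Lemma comp_tr : corr X1 X2 tau1 tau2 phi psi -> forall C,
  gcomponent X1 tau1 C -> gcomponent X2 tau2 (phi @` C).
Proof.
move=> c; have c' := corr_sym c; have c0 := c; case: c0 => f1 f2 f3 f4 [f5 f6] C [x Xx ->].
exists (phi x); first exact: f1.
apply/seteqP; split.
- move=> _ [y [A [AX cA Ax] Ay] <-]; exists (phi @` A); last by exists y.
  split; [by move=> _ [z Az <-]; apply: f1; apply: AX|exact: (conn_tr c)|by exists x].
- move=> y [B [BX cB Bx] By].
  have cB' := conn_tr c' BX cB.
  exists (psi y); last by rewrite f4 //; apply: BX.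
  exists (psi @` B); last by exists y.
  split => //; first by move=> _ [z Bz <-]; apply: f2; apply: BX.
  by exists (phi x) => //; exact: f3.
Qed.

Lemma lc_tr : corr X1 X2 tau1 tau2 phi psi -> forall C, C `<=` X1 ->
  glocally_connected tau1 C -> glocally_connected tau2 (phi @` C).
Proof.
move=> c; have c0 := c; case: c0 => f1 f2 f3 f4 [f5 f6] C CX lc _ [x Cx <-] U tU Ux.
have [sU tU'] := f6 _ tU.
have [V [tV Vx CVU cCV]] := lc x Cx _ tU' (ex_intro2 _ _ (phi x) Ux (f3 _ (CX _ Cx))).
have [sV tV'] := f5 _ tV.
have eq : phi @` C `&` phi @` V = phi @` (C `&` V).
  apply/seteqP; split.
    move=> _ [[a Ca <-] [b Vb e]].
    have ab : a = b by rewrite -(f3 _ (CX _ Ca)) -e f3 //; apply: sV.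
    by exists a => //; split => //; rewrite ab.
  by move=> _ [a [Ca Va] <-]; split; exists a.
exists (phi @` V); split.
- exact: tV'.
- by exists x.
- rewrite eq => _ [a [Ca Va] <-]; have [u Uu <-] := CVU a (conj Ca Va).
  by rewrite f4 //; apply: sU.
- rewrite eq; apply: (conn_tr c) => //; by move=> a [Ca _]; apply: CX.
Qed.

End Corr2.

Lemma peano_tr (R : realType) (S1 S2 : Type) (X1 : set S1) (X2 : set S2)
  (tau1 : set (set S1)) (tau2 : set (set S2)) (phi : S1 -> S2) (psi : S2 -> S1) :
  corr X1 X2 tau1 tau2 phi psi -> peano_space R X1 tau1 -> peano_space R X2 tau2.
Proof.
move=> c; have c' := corr_sym c; have c0 := c.
case: c0 => f1 f2 f3 f4 [f5 f6].
case=> dist [[mt op] cpt cnt lc fin].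
exists (fun y y' => dist (psi y) (psi y')); split.
- split.
  + move=> x y z Xx Xy Xz.
    have [a b d e] := mt _ _ _ (f2 _ Xx) (f2 _ Xy) (f2 _ Xz); split => //.
    split; last by move=> ee; apply/b; rewrite ee.
    by move=> /b ee; rewrite -(f4 _ Xx) ee f4.
  + move=> V; split.
    * move=> tV; have [sV tV'] := f6 _ tV; split => // y Vy.
      have [_ hb] := (op _).1 tV'.
      have [e e0 be] := hb (psi y) (ex_intro2 _ _ y Vy erefl).
      exists e => // y' [Xy' d'].
      have [v Vv ev] := be (psi y') (conj (f2 _ Xy') d').
      by rewrite -(f4 _ Xy') -ev f4 //; apply: sV.
    * case=> sV hb.
      have tV' : tau1 (psi @` V).
        apply/op; split; first by move=> _ [y Vy <-]; apply: f2; apply: sV.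
        move=> _ [y Vy <-]; have [e e0 be] := hb y Vy.
        exists e => // x' [Xx' d'].
        exists (phi x'); last exact: f3.
        by apply: be; split; [exact: f1|rewrite f3].
      have [_ t2] := f5 _ tV'.
      by rewrite -(imgK c sV).
- move=> UU sUU cov.
  have h1 : (fun U => psi @` U) @` UU `<=` tau1.
    by move=> _ [U UUU <-]; exact: (f6 _ (sUU _ UUU)).2.
  have h2 : X1 `<=` \bigcup_(U in (fun U => psi @` U) @` UU) U.
    move=> x Xx; have [U UUU Ux] := cov (phi x) (f1 _ Xx).
    by exists (psi @` U); [exists U|exists (phi x) => //; exact: f3].
  have [VV [fVV sVV] cov'] := cpt _ h1 h2.
  exists ((fun V => phi @` V) @` VV); first split.
  + exact: finite_image.
  + move=> _ [V VVV <-]; have [U UUU <-] := sVV _ VVV.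
    by rewrite (imgK c (f6 _ (sUU _ UUU)).1).
  + move=> y Xy; have [V VVV Vx] := cov' (psi y) (f2 _ Xy).
    by exists (phi @` V); [exists V|exists (psi y) => //; exact: f4].
- apply: sub_countable cnt.
  apply: card_le_trans (card_image_le (fun C => phi @` C) _).
  apply: subset_card_le => C [cC nC].
  have CX := comp_sub cC.
  exists (psi @` C); last exact: (imgK c CX).
  split; first exact: (comp_tr c').
  exact: (nondeg_tr c').
- move=> C cC nC.
  have CX := comp_sub cC.
  rewrite -(imgK c CX); apply: (lc_tr c).
    by move=> _ [y Cy <-]; apply: f2; apply: CX.
  apply: lc; first exact: (comp_tr c').
  exact: (nondeg_tr c').
- move=> eps e0; apply: sub_finite_set (finite_image (fun C => phi @` C) (fin eps e0)).
  move=> C [cC [y [y' [Cy Cy' d]]]].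
  have CX := comp_sub cC.
  exists (psi @` C); last exact: (imgK c CX).
  split; first exact: (comp_tr c').
  by exists (psi y), (psi y'); split; [exists y|exists y'|].
Qed.

Lemma pull_open {T U : topologicalType} (A : set T) (f : T -> U) (W : set U) :
  {within A, continuous f} -> open W ->
  exists2 V, open V & A `&` f @^-1` W = A `&` V.
Proof.
move=> /continuousP cf oW.
have := cf W oW => /open_subspaceP [V oV e].
by exists V => //; rewrite setIC -e setIC.
Qed.

Section Sph.
Context (R : realType).
Local Notation T := 'rV[R]_3.

Definition emb (K : set T) (h g : T -> T) :=
  [/\ {within K, continuous h}, (forall x, K x -> g (h x) = x) &
      {within h @` K, continuous g}].

Lemma gh_img K h g : emb K h g -> forall d, d `<=` K -> g @` (h @` d) = d.
Proof.
case=> _ gh _ d dK; apply/seteqP; split.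
  by move=> _ [_ [x dx <-] <-]; rewrite gh //; apply: dK.
by move=> x dx; exists (h x); [exists x|rewrite gh //; apply: dK].
Qed.

Lemma emb_sym K h g : emb K h g -> emb (h @` K) g h.
Proof.
move=> e; have e0 := e; case: e0 => hc gh gc; split => //.
  by move=> _ [x Kx <-]; rewrite gh.
by rewrite (gh_img e).
Qed.

Lemma relopen_img K h g W : emb K h g -> open W ->
  rel_open (h @` K) (h @` (K `&` W)).
Proof.
case=> hc gh gc oW.
have [V oV eV] := pull_open gc oW.
exists V => //; rewrite -eV; apply/seteqP; split.
  by move=> _ [x [Kx Wx] <-]; split; [exists x|rewrite /preimage /= gh].
move=> _ [[x Kx <-]]; rewrite /preimage /= gh // => Wx.
by exists x.
Qed.

Lemma mono_tr K h g D : emb K h g -> monotone_decomposition K D ->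
  monotone_decomposition (h @` K) ((fun d => h @` d) @` D).
Proof.
move=> e; have e0 := e; case: e0 => hc gh gc [sub disj cov usc]; split.
- move=> _ [d Dd <-]; have [[ne cpt cn] dK] := sub d Dd.
  have hcd := continuous_subspaceW dK hc.
  split; last exact: image_subset.
  split.
  + by case: ne => x dx; exists (h x), x.
  + exact: continuous_compact.
  + exact: connected_continuous_connected.
- move=> _ _ [d Dd <-] [d' Dd' <-] [_ [[x dx <-] [y ey exy]]].
  have xK := (sub d Dd).2 x dx; have yK := (sub d' Dd').2 y ey.
  have xy : x = y by rewrite -(gh _ xK) -exy gh.
  by rewrite (disj d d' Dd Dd') //; exists x; split => //; rewrite xy.
- move=> _ [x Kx <-]; have [d Dd dx] := cov x Kx.
  by exists (h @` d); [exists d|exists x].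
- move=> _ [d Dd <-] U oU hdU.
  have dK := (sub d Dd).2.
  have [W oW eW] := pull_open hc oU.
  have dW : d `<=` W.
    move=> x dx; have : (K `&` h @^-1` U) x by split; [apply: dK|apply: hdU; exists x].
    by rewrite eW => -[].
  have [V0 oV0 [dV0 hV0]] := usc d Dd W oW dW.
  have [V' oV' eV'] := pull_open gc oV0.
  exists V' => //; split.
  + move=> _ [x dx <-].
    have : (h @` K `&` g @^-1` V0) (h x).
      by split; [exists x => //; apply: dK|rewrite /preimage /= gh; [apply: dV0|apply: dK]].
    by rewrite eV' => -[].
  + move=> _ [d' Dd' <-] [_ [[x ex <-] V'hx]] _ [y ey <-].
    have eK := (sub d' Dd').2.
    have : (h @` K `&` V') (h x) by split => //; exists x => //; apply: eK.
    rewrite -eV' => -[_]; rewrite /preimage /= gh; last by apply: eK.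
    move=> V0x.
    have eW' := hV0 d' Dd' (ex_intro _ x (conj ex V0x)).
    have : (K `&` W) y by split; [apply: eK|apply: eW'].
    by rewrite -eW => -[].
Qed.

Lemma hyp_tr K h g D D' UU : emb K h g ->
  (forall d, D d -> D' (h @` d)) ->
  hyper_open K D UU -> hyper_open (h @` K) D' ((fun d => h @` d) @` UU).
Proof.
move=> e hD [sUU [W oW eW]]; split.
  by move=> _ [d UUd <-]; apply: hD; apply: sUU.
rewrite bigcup_image -image_bigcup eW.
exact: (relopen_img e oW).
Qed.

Lemma hyp_peano K h g D : emb K h g -> monotone_decomposition K D ->
  peano_hyperspace K D ->
  peano_hyperspace (h @` K) ((fun d => h @` d) @` D).
Proof.
move=> e [sub _ _ _]; apply: (peano_tr (X1 := D) (X2 := (fun d => h @` d) @` D) (tau1 := hyper_open K D) (tau2 := hyper_open (h @` K) ((fun d => h @` d) @` D)) (phi := fun d => h @` d) (psi := fun d => g @` d)).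
have es := emb_sym e.
split.
- by move=> d Dd; exists d.
- by move=> _ [d Dd <-]; rewrite (gh_img e) //; exact: (sub d Dd).2.
- by move=> d Dd; rewrite (gh_img e) //; exact: (sub d Dd).2.
- by move=> _ [d Dd <-]; rewrite (gh_img e) //; exact: (sub d Dd).2.
split.
- move=> UU hUU; split; first by case: hUU.
  by apply: (hyp_tr e _ hUU) => d Dd; exists d.
- move=> VV hVV; split; first by case: hVV.
  have hD : forall e', ((fun d => h @` d) @` D) e' -> D (g @` e').
    by move=> _ [d Dd <-]; rewrite (gh_img e) //; exact: (sub d Dd).2.
  have := hyp_tr es hD hVV.
  by rewrite (gh_img e (@subset_refl _ K)).
Qed.

End Sph.

Section Main.
Context (R : realType).
Local Notation T := 'rV[R]_3.

Lemma partA (K : set T) h g DK DhK : emb K h g -> is_DPS K DK ->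
  is_DPS (h @` K) DhK -> forall d, DK d -> DhK (h @` d).
Proof.
move=> e [mK pK fK] [mH pH fH].
have es := emb_sym e.
have m1 := mono_tr e mK; have p1 := hyp_peano e mK pK.
have m2 := mono_tr es mH; have p2 := hyp_peano es mH pH.
rewrite (gh_img e (@subset_refl _ K)) in m2 p2.
have F1 := fH _ m1 p1; have F2 := fK _ m2 p2.
move=> d Dd.
have [_ [e' De' <-] de] := F2 d Dd.
have [_ [d' Dd' <-] ed] := F1 e' De'.
case: mK => subK disjK _ _.
case: mH => subH _ _ _.
have d'K := (subK d' Dd').2.
have dK := (subK d Dd).2.
have e'K := (subH e' De').2.
have dd' : d `<=` d'.
  move=> x dx; have [y e'y <-] := de x dx.
  have [z d'z <-] := ed y e'y.
  by have [_ ghe _] := e; rewrite ghe //; apply: d'K.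
have eqd : d = d'.
  apply: disjK => //; have [[[x dx] _ _] _] := subK d Dd.
  by exists x; split => //; apply: dd'.
suff -> : h @` d = e' by [].
apply/seteqP; split; last by rewrite eqd.
move=> _ [x dx <-]; have [y e'y <-] := de x dx.
have [_ hg _] := es; by rewrite hg //; apply: e'K.
Qed.

End Main.

Theorem theoremC (R : realType) (K : set 'rV[R]_3) (h : 'rV[R]_3 -> 'rV[R]_3)
  (DK DhK : set (set 'rV[R]_3)) :
  compact K -> K `<=` @riemann_sphere R -> embedding_into_sphere K h ->
  is_DPS K DK -> is_DPS (h @` K) DhK ->
  (forall d, DK d -> DhK (h @` d)) /\
  ghomeomorphic DK (hyper_open K DK) DhK (hyper_open (h @` K) DhK).
Proof.
move=> _ _ [_ hc _ [g [gh gc]]] dK dH.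
have e : emb K h g by split.
have es := emb_sym e.
have hgK := gh_img e (@subset_refl _ K).
have A1 := partA e dK dH.
have A2 : forall d, DhK d -> DK (g @` d).
  have dK' : is_DPS (g @` (h @` K)) DK by rewrite hgK.
  exact: (partA es dH dK').
have subK : forall d, DK d -> d `<=` K.
  by case: dK => -[sub _ _ _] _ _ d Dd; exact: (sub d Dd).2.
have subH : forall d, DhK d -> d `<=` h @` K.
  by case: dH => -[sub _ _ _] _ _ d Dd; exact: (sub d Dd).2.
split => //.
exists (fun d => h @` d); split.
- split.
  + by move=> d Dd; apply: A1.
  + move=> d d' /set_mem Dd /set_mem Dd' eq.
    by rewrite -(gh_img e (subK _ Dd)) eq (gh_img e (subK _ Dd')).
  + move=> d Dd; exists (g @` d); first exact: A2.
    exact: (gh_img es (subH _ Dd)).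
- move=> UU hUU.
  have := hyp_tr es A2 hUU; rewrite hgK.
  suff -> : DK `&` (fun d => h @` d) @^-1` UU = (fun d => g @` d) @` UU by [].
  apply/seteqP; split.
    move=> d [Dd UUd]; exists (h @` d) => //.
    exact: (gh_img e (subK _ Dd)).
  move=> _ [d UUd <-]; have Dd : DhK d by case: hUU => s _; apply: s.
  split; first exact: A2.
  by rewrite /preimage /= (gh_img es (subH _ Dd)).
- move=> UU hUU; exact: (hyp_tr e A1 hUU).
Qed.
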